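(* Let $\mathcal{H}$ be a complex Hilbert space, $A\in\mathcal{B}(\mathcal{H})$ positive and $S\in\mathcal{B}_A(\mathcal{H})$. Then $$d\omega_A^2(S)+2\|S\|_A^2\|\Re_A(S)\|_A\ge\max\left\{\omega_A^2\left(S+S^{\sharp_A}S\right),\ \omega_A^2\left(S-S^{\sharp_A}S\right)\right\}.$$
   Context: $\mathcal{B}(\mathcal{H})$ denotes the bounded linear operators on $\mathcal{H}$. For positive $A$, $\langle x,z\rangle_A=\langle Ax,z\rangle$ and $\|z\|_A=\|A^{1/2}z\|$. $\mathcal{B}_A(\mathcal{H})$ is the set of $S\in\mathcal{B}(\mathcal{H})$ for which some $R\in\mathcal{B}(\mathcal{H})$ satisfies $AR=S^*A$; for such $S$, $S^{\sharp_A}=A^{\dagger}S^*A$ with $A^\dagger$ the Moore–Penrose inverse of $A$. $\Re_A(S)=\frac{S+S^{\sharp_A}}{2}$. For operators $T$ bounded with respect to $\|\cdot\|_A$: $\|T\|_A=\sup_{\|z\|_A=1}\|Tz\|_A$, $\omega_A(T)=\sup_{\|z\|_A=1}|\langle Tz,z\rangle_A|$, and $d\omega_A(T)=\sup_{\|z\|_A=1}(|\langle Tz,z\rangle_A|^2+\|Tz\|_A^4)^{1/2}$. *)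

(* Defs.v *)
From HB Require Import structures.
From mathcomp Require Import all_boot all_order all_algebra.
From mathcomp Require Import complex.
From mathcomp Require Import boolp classical_sets reals.
From Stdlib Require Import ClassicalEpsilon.

Set Implicit Arguments.
Unset Strict Implicit.
Unset Printing Implicit Defensive.

Import Order.TTheory GRing.Theory Num.Theory.
Local Open Scope ring_scope.
Local Open Scope classical_set_scope.

Definition hnorm_of (R : realType) (V : lmodType R[i]) (ip : V -> V -> R[i])
  (x : V) : R := Num.sqrt (complex.Re (ip x x)).

Record hilbert (R : realType) (V : lmodType R[i]) := Hilbert {
  ip : V -> V -> R[i];
  ip_linl : forall (a : R[i]) (x y z : V), ip (a *: x + y) z = a * ip x z + ip y z;
  ip_conj : forall x y : V, ip y x = conjc (ip x y);
  ip_ge0 : forall x : V, 0 <= ip x x;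
  ip_eq0 : forall x : V, ip x x = 0 -> x = 0;
  ip_complete : forall u : nat -> V,
    (forall e : R, 0 < e -> exists N : nat, forall m n : nat,
        (N <= m)%N -> (N <= n)%N -> hnorm_of ip (u m - u n) < e) ->
    exists l : V, forall e : R, 0 < e -> exists N : nat, forall n : nat,
        (N <= n)%N -> hnorm_of ip (u n - l) < e
}.

Section Operators.
Variables (R : realType) (V : lmodType R[i]) (H : hilbert V).

Definition hnorm (x : V) : R := hnorm_of (ip H) x.

Definition bounded_op (T : V -> V) : Prop :=
  (forall (a : R[i]) (x y : V), T (a *: x + y) = a *: T x + T y) /\
  exists M : R, forall x : V, hnorm (T x) <= M * hnorm x.

(* Hilbert-space adjoint T^* (unique for bounded T, by Riesz) *)
Definition adjoint (T : V -> V) : V -> V :=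
  epsilon (inhabits (fun x : V => x))
    (fun Ts : V -> V => forall x y : V, ip H (T x) y = ip H x (Ts y)).

Definition positive_op (A : V -> V) : Prop :=
  bounded_op A /\ forall x : V, 0 <= ip H (A x) x.

(* Moore-Penrose inverse of A, evaluated at y (in its domain
   R(A) + R(A)^perp): the unique x in N(A)^perp with A x - y in R(A)^perp. *)
Definition mp_inv (A : V -> V) (y : V) : V :=
  epsilon (inhabits (0 : V))
    (fun x : V => (forall k : V, A k = 0 -> ip H x k = 0) /\
                  (forall w : V, ip H (A x - y) (A w) = 0)).

Definition in_BA (A S : V -> V) : Prop :=
  bounded_op S /\
  exists Rop : V -> V, bounded_op Rop /\ forall x : V, A (Rop x) = adjoint S (A x).

Definition sharp (A S : V -> V) : V -> V :=
  fun x => mp_inv A (adjoint S (A x)).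

Definition ReA (A S : V -> V) : V -> V :=
  fun x => 2%:R^-1 *: (S x + sharp A S x).

Definition ipA (A : V -> V) (x z : V) : R[i] := ip H (A x) z.
Definition normA (A : V -> V) (z : V) : R := Num.sqrt (complex.Re (ipA A z z)).

Definition cmod (z : R[i]) : R := ComplexField.Normc.normc z.

Definition opnormA (A T : V -> V) : R :=
  sup [set r : R | exists z : V, normA A z = 1 /\ r = normA A (T z)].

Definition numradA (A T : V -> V) : R :=
  sup [set r : R | exists z : V, normA A z = 1 /\ r = cmod (ipA A (T z) z)].

Definition dnumradA (A T : V -> V) : R :=
  sup [set r : R | exists z : V, normA A z = 1 /\
        r = Num.sqrt (cmod (ipA A (T z) z) ^+ 2 + normA A (T z) ^+ 4)].

End Operators.

(* Main.v *)
Require Import Defs.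
From HB Require Import structures.
From mathcomp Require Import all_boot all_order all_algebra.
From mathcomp Require Import complex.
From mathcomp Require Import boolp classical_sets reals.
From mathcomp Require Import ring lra.
From Stdlib Require Import ClassicalEpsilon.
Set Implicit Arguments.
Unset Strict Implicit.
Unset Printing Implicit Defensive.
Import Order.TTheory GRing.Theory Num.Theory.
Local Open Scope ring_scope.
Local Open Scope complex_scope.

Section Cplx.
Variable R : realType.
Lemma ReM (a b : R[i]) : complex.Re (a * b) = complex.Re a * complex.Re b - complex.Im a * complex.Im b.
Proof. by case: a => a1 a2; case: b => b1 b2. Qed.
Lemma ImM (a b : R[i]) : complex.Im (a * b) = complex.Re a * complex.Im b + complex.Im a * complex.Re b.
Proof. by case: a => a1 a2; case: b => b1 b2 /=. Qed.
Lemma ReD (a b : R[i]) : complex.Re (a + b) = complex.Re a + complex.Re b.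
Proof. by case: a => a1 a2; case: b => b1 b2. Qed.
Lemma ImD (a b : R[i]) : complex.Im (a + b) = complex.Im a + complex.Im b.
Proof. by case: a => a1 a2; case: b => b1 b2. Qed.
Lemma ReN (a : R[i]) : complex.Re (- a) = - complex.Re a.
Proof. by case: a. Qed.
Lemma ImN (a : R[i]) : complex.Im (- a) = - complex.Im a.
Proof. by case: a. Qed.
Lemma ReJ (a : R[i]) : complex.Re (conjc a) = complex.Re a.
Proof. by case: a. Qed.
Lemma ImJ (a : R[i]) : complex.Im (conjc a) = - complex.Im a.
Proof. by case: a. Qed.
Lemma ReC (a : R) : complex.Re (a%:C) = a. Proof. by []. Qed.
Lemma ImC (a : R) : complex.Im (a%:C) = 0. Proof. by []. Qed.
Lemma Re0 : complex.Re (0 : R[i]) = 0. Proof. by []. Qed.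
Lemma Im0 : complex.Im (0 : R[i]) = 0. Proof. by []. Qed.
Lemma normc2 (a : R[i]) : cmod a ^+ 2 = complex.Re a ^+ 2 + complex.Im a ^+ 2.
Proof. case: a => a1 a2; rewrite /cmod /= sqr_sqrtr //; nra. Qed.
Lemma cmod_ge0 (a : R[i]) : 0 <= cmod a.
Proof. by case: a => a1 a2; rewrite /cmod /= sqrtr_ge0. Qed.
Lemma cplx_eq (a b : R[i]) : complex.Re a = complex.Re b -> complex.Im a = complex.Im b -> a = b.
Proof. by case: a => a1 a2; case: b => b1 b2 /= -> ->. Qed.
Lemma half_C : (2%:R^-1 : R[i]) = (2^-1 : R)%:C.
Proof. by rewrite fmorphV /= rmorph_nat. Qed.
Lemma Re_le_cmod (a : R[i]) : `|complex.Re a| <= cmod a.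
Proof.
have h := normc2 a; have c0 := cmod_ge0 a; have i0 := sqr_ge0 (complex.Im a).
rewrite ler_norml; apply/andP; split; nra.
Qed.
Lemma quad_disc (a B c : R) : 0 <= c -> 0 <= B ->
  (forall s : R, 0 <= a - 2 * s * B + s ^+ 2 * B * c) -> B <= a * c.
Proof.
move=> c0 B0 h; have [cp|] := ltrP 0 c.
  have := h c^-1; rewrite -(@ler_pM2r _ c) // mul0r => H.
  have e : (a - 2 * c^-1 * B + c^-1 ^+ 2 * B * c) * c = a * c - B.
    by field; rewrite gt_eqF.
  by move: H; rewrite e subr_ge0.
move=> cle; have ce : c = 0 by apply/le_anti; rewrite cle c0.
subst c; rewrite mulr0; have [Bp|] := ltrP 0 B; last by [].
have := h ((`|a| + 1) / (2 * B)).
have e : a - 2 * ((`|a| + 1) / (2 * B)) * B + ((`|a| + 1) / (2 * B)) ^+ 2 * B * 0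
   = a - (`|a| + 1) by field; rewrite gt_eqF.
rewrite e subr_ge0 => H; have := ler_norm a; lra.
Qed.
Lemma sq_le (a b : R) : 0 <= a -> 0 <= b -> a ^+ 2 <= b ^+ 2 -> a <= b.
Proof. by move=> a0 b0; rewrite ler_sqr ?nnegrE. Qed.
Lemma sqrt_lt (q e : R) : 0 <= q -> 0 < e -> q < e ^+ 2 -> Num.sqrt q < e.
Proof.
move=> q0 e0 h; rewrite -(ltr_pXn2r (n:=2)) // ?nnegrE ?sqrtr_ge0 ?ltW //.
by rewrite sqr_sqrtr.
Qed.
Lemma inv_nat_le (n m : nat) : (n <= m)%N -> m.+1%:R^-1 <= n.+1%:R^-1 :> R.
Proof. by move=> h; rewrite lef_pV2 ?posrE ?ltr0n // ler_nat ltnS. Qed.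
Lemma two_C : (2%:R : R[i]) = (2%:R : R)%:C.
Proof. by rewrite rmorph_nat. Qed.
Lemma small_eq0 (h K : R) : 0 <= h -> (forall e, 0 < e -> h <= K * e) -> h = 0.
Proof.
move=> h0 H; apply/eqP; rewrite eq_le h0 andbT leNgt; apply/negP => hp.
have k1 : 0 < `|K| + 1 by have := normr_ge0 K; lra.
have := H (h / (`|K| + 1)) (divr_gt0 hp k1).
rewrite mulrA ler_pdivlMr // => H2.
have := ler_norm K; nra.
Qed.
Lemma cmodN (a : R[i]) : cmod (- a) = cmod a.
Proof. by case: a => a1 a2; rewrite /cmod /= !sqrrN. Qed.
Lemma cmod_eq0 (a : R[i]) : cmod a = 0 -> a = 0.
Proof. exact: ComplexField.Normc.eq0_normc. Qed.
Lemma bernoulli (r : R) (k : nat) : 1 <= r -> 1 + k%:R * (r - 1) <= r ^+ k.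
Proof.
move=> r1; elim: k => [|k IH]; first by rewrite mul0r addr0 expr0.
rewrite exprS -nat1r.
have h : 0 <= r ^+ k by rewrite exprn_ge0 //; lra.
set t := r ^+ k in IH h *; set n := k%:R in IH *.
have n0 : 0 <= n by rewrite /n ler0n.
have h1 : 0 <= r * (t - 1 - n * (r - 1)) by apply: mulr_ge0; lra.
have h2 : 0 <= n * (r - 1) ^+ 2 by apply: mulr_ge0 => //; exact: sqr_ge0.
nra.
Qed.
Lemma pow_bound (x y C : R) : 0 <= x -> 0 < y -> (forall k, x ^+ k <= C * y ^+ k) -> x <= y.
Proof.
move=> x0 y0 h; rewrite leNgt; apply/negP => xy.
set r := x / y.
have r1 : 1 < r by rewrite /r ltr_pdivlMr // mul1r.
have hk : forall k, 1 + k%:R * (r - 1) <= C.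
  move=> k; apply: le_trans (bernoulli k (ltW r1)) _.
  rewrite /r expr_div_n ler_pdivrMr ?exprn_gt0 //; exact: h.
have rp : 0 < r - 1 by rewrite subr_gt0.
have [C0|C0] := leP C 0.
  by have := hk 0%N; rewrite mul0r addr0; lra.
have := archi_boundP (ltW (divr_gt0 C0 rp)).
set n := Num.Def.archi_bound _ => hn.
have := hk n; move: hn; rewrite ltr_pdivrMr //.
set m := n%:R; lra.
Qed.
Lemma sq_mono (a b : R) : 0 <= a -> a <= b -> a ^+ 2 <= b ^+ 2.
Proof. move=> a0 ab; nra. Qed.
End Cplx.
Definition sesq (R : realType) (V : lmodType R[i]) (f : V -> V -> R[i]) :=
  (forall (a : R[i]) (x y z : V), f (a *: x + y) z = a * f x z + f y z) /\
  (forall x y, f y x = conjc (f x y)) /\ (forall x, 0 <= f x x).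
Section Sesq.
Variable R : realType.
Variable V : lmodType R[i].
Variable f : V -> V -> R[i].
Hypothesis hf : sesq f.
Lemma f_linl (a : R[i]) (x y z : V) : f (a *: x + y) z = a * f x z + f y z.
Proof. by case: hf. Qed.
Lemma f_conj x y : f y x = conjc (f x y).
Proof. by case: hf => _ []. Qed.
Lemma f_ge0 x : 0 <= f x x.
Proof. by case: hf => _ [_ ->]. Qed.

Lemma f0l z : f 0 z = 0.
Proof.
have := f_linl 1 0 0 z; rewrite scaler0 addr0 mul1r => h.
by move: h => /(congr1 (fun t => t - f 0 z)); rewrite subrr addrK.
Qed.
Lemma fDl x y z : f (x + y) z = f x z + f y z.
Proof. by rewrite -[x in LHS]scale1r f_linl mul1r. Qed.
Lemma fZl a x z : f (a *: x) z = a * f x z.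
Proof. by rewrite -[_ *: x]addr0 f_linl f0l addr0. Qed.
Lemma fNl x z : f (- x) z = - f x z.
Proof. by rewrite -scaleN1r fZl mulN1r. Qed.
Lemma fBl x y z : f (x - y) z = f x z - f y z.
Proof. by rewrite fDl fNl. Qed.
Lemma fDr x y z : f z (x + y) = f z x + f z y.
Proof. by rewrite f_conj fDl rmorphD /= -!f_conj. Qed.
Lemma fZr a x z : f z (a *: x) = conjc a * f z x.
Proof. by rewrite f_conj fZl rmorphM /= -!f_conj. Qed.
Lemma fNr x z : f z (- x) = - f z x.
Proof. by rewrite f_conj fNl rmorphN /= -!f_conj. Qed.
Lemma fBr x y z : f z (x - y) = f z x - f z y.
Proof. by rewrite fDr fNr. Qed.
Lemma f0r z : f z 0 = 0.
Proof. by rewrite f_conj f0l conjc0. Qed.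

Lemma f_Im x : complex.Im (f x x) = 0.
Proof. exact: ger0_Im (f_ge0 x). Qed.

Definition qf x := complex.Re (f x x).
Lemma qf_ge0 x : 0 <= qf x.
Proof. by have := f_ge0 x; rewrite lecE => /andP[_]. Qed.
Lemma f_diag x : f x x = (qf x)%:C.
Proof. by apply: cplx_eq => //=; rewrite f_Im. Qed.

Lemma ReJf x y : complex.Re (f y x) = complex.Re (f x y).
Proof. by rewrite f_conj ReJ. Qed.

Lemma qfD x y : qf (x + y) = qf x + qf y + 2 * complex.Re (f x y).
Proof. rewrite /qf fDl !fDr !ReD ReJf; ring. Qed.
Lemma qfB x y : qf (x - y) = qf x + qf y - 2 * complex.Re (f x y).
Proof. rewrite /qf fBl !fBr !ReD !ReN ReJf; ring. Qed.
Lemma qfZ a x : qf (a *: x) = cmod a ^+ 2 * qf x.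
Proof.
rewrite /qf fZl fZr normc2 ReM ImM ReM ImJ ReJ f_Im /=; ring.
Qed.
Lemma qfN x : qf (- x) = qf x.
Proof. by rewrite /qf fNl fNr opprK. Qed.

Lemma CS x y : cmod (f x y) ^+ 2 <= qf x * qf y.
Proof.
have key : forall t : R[i], 0 <= qf x + cmod t ^+ 2 * qf y - 2 * complex.Re (conjc t * f x y).
  move=> t; rewrite -qfZ -fZr -qfB; exact: qf_ge0.
apply: quad_disc; [exact: qf_ge0|exact: sqr_ge0|] => s.
have := key ((s%:C)%C * f x y).
rewrite !normc2 !ReM !ImM !ReJ !ImJ !ReM !ImM /=.
move=> h; set a := complex.Re (f x y) in h *; set b := complex.Im (f x y) in h *.
nra.
Qed.

Lemma cmod_f_le x y : cmod (f x y) <= Num.sqrt (qf x) * Num.sqrt (qf y).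
Proof.
have h := CS x y; have c0 := cmod_ge0 (f x y).
have s1 := sqr_sqrtr (qf_ge0 x); have s2 := sqr_sqrtr (qf_ge0 y).
have t1 := sqrtr_ge0 (qf x); have t2 := sqrtr_ge0 (qf y).
set u := Num.sqrt (qf x) in s1 t1 *; set v := Num.sqrt (qf y) in s2 t2 *.
rewrite -s1 -s2 -exprMn in h; apply: sq_le => //; exact: mulr_ge0.
Qed.

Lemma Ref_le x y : complex.Re (f x y) <= Num.sqrt (qf x) * Num.sqrt (qf y).
Proof. exact: le_trans (ler_norm _) (le_trans (Re_le_cmod _) (cmod_f_le x y)). Qed.

Lemma sqrt_qfD x y : Num.sqrt (qf (x + y)) <= Num.sqrt (qf x) + Num.sqrt (qf y).
Proof.
have h := Ref_le x y; have e := qfD x y.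
have s1 := sqr_sqrtr (qf_ge0 x); have s2 := sqr_sqrtr (qf_ge0 y).
have s3 := sqr_sqrtr (qf_ge0 (x + y)).
have t1 := sqrtr_ge0 (qf x); have t2 := sqrtr_ge0 (qf y).
have t3 := sqrtr_ge0 (qf (x + y)).
set u := Num.sqrt (qf x) in s1 t1 h *; set v := Num.sqrt (qf y) in s2 t2 h *.
set w := Num.sqrt (qf (x + y)) in s3 t3 *.
apply: sq_le => //; first exact: addr_ge0.
rewrite s3 e -s1 -s2; nra.
Qed.

Lemma parallelogram x y : qf (x + y) + qf (x - y) = 2 * qf x + 2 * qf y.
Proof. rewrite qfD qfB; ring. Qed.

End Sesq.
Section Hilb.
Variable R : realType.
Variable V : lmodType R[i].
Variable H : hilbert V.
Local Notation ipH := (ip H).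

Lemma ipH_sesq : sesq ipH.
Proof. split; [exact: ip_linl | split; [exact: ip_conj | exact: ip_ge0]]. Qed.
Local Notation qH := (qf ipH).

Lemma qH_eq0 x : qH x = 0 -> x = 0.
Proof. by move=> h; apply: (@ip_eq0 _ _ H); rewrite (f_diag ipH_sesq) h. Qed.

Definition closedS (M : V -> Prop) := forall (u : nat -> V) l, (forall n, M (u n)) ->
  (forall e : R, 0 < e -> exists N : nat, forall n, (N <= n)%N -> hnorm H (u n - l) < e) -> M l.
Definition subsp (M : V -> Prop) := M 0 /\ forall a x y, M x -> M y -> M (a *: x + y).

Lemma projection M : subsp M -> closedS M -> forall x,
  exists p, M p /\ forall m, M m -> ipH (x - p) m = 0.
Proof.
move=> sM Mcl x; case: sM => M0 Mlin.
pose E : set R := fun r => exists m, M m /\ r = qH (x - m).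
have E0 : E (qH x) by exists 0; rewrite subr0.
have Elb : lbound E 0 by move=> r [m [_ ->]]; exact: (qf_ge0 ipH_sesq).
have hlb : has_lbound E by exists 0.
have hinf : has_inf E by split; [exists (qH x) | exact: hlb].
set d := inf E.
have d_le : forall m, M m -> d <= qH (x - m).
  by move=> m Mm; apply: (ge_inf hlb); exists m.
have d0 : 0 <= d by apply: lb_le_inf => //; exists (qH x).
have ex_m : forall n : nat, exists m, M m /\ qH (x - m) < d + n.+1%:R^-1.
  move=> n; have pos : 0 < n.+1%:R^-1 :> R by rewrite invr_gt0 ltr0n.
  have [r [m [Mm ->]] hr] := @inf_adherent _ E n.+1%:R^-1 pos hinf.
  by exists m.
pose ms n := proj1_sig (cid (ex_m n)).
have msP n : M (ms n) /\ qH (x - ms n) < d + n.+1%:R^-1 := proj2_sig (cid (ex_m n)).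
have cb : forall n k, qH (ms n - ms k) <= 2 * n.+1%:R^-1 + 2 * k.+1%:R^-1.
  move=> n k.
  have [Mn hn] := msP n; have [Mk hk] := msP k.
  pose mid := 2%:R^-1 *: (ms n + ms k).
  have Mmid : M mid.
    rewrite /mid -[_ *: _]addr0; apply: (Mlin) => //.
    by rewrite -[ms n]scale1r; apply: (Mlin).
  have hpar := parallelogram ipH_sesq (x - ms k) (x - ms n).
  have e2 : (x - ms k) + (x - ms n) = 2%:R *: (x - mid).
    rewrite /mid scalerBr scalerA mulfV ?pnatr_eq0 // scale1r scaler_nat mulr2n.
    by rewrite addrACA opprD [- ms k + _]addrC.
  have e3 : (x - ms k) - (x - ms n) = ms n - ms k.
    by rewrite opprD opprK addrACA subrr add0r addrC.
  rewrite e2 e3 (qfZ ipH_sesq) two_C normc2 ReC ImC in hpar.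
  have := d_le _ Mmid.
  have := d_le _ Mn; have := d_le _ Mk.
  move: hpar; set a := qH (x - mid); set b := qH (ms n - ms k).
  move=> hpar h1 h2 h3.
  have e4 : (2%:R : R) ^+ 2 + 0 ^+ 2 = 4%:R by rewrite expr0n /= addr0 -natrX.
  rewrite e4 in hpar; set i1 := n.+1%:R^-1 in hn *; set i2 := k.+1%:R^-1 in hk *; lra.
have cauchy : forall e : R, 0 < e -> exists N : nat, forall n k : nat,
    (N <= n)%N -> (N <= k)%N -> hnorm_of ipH (ms n - ms k) < e.
  move=> e e0.
  have pos : 0 < e ^+ 2 / 4%:R by rewrite divr_gt0 ?exprn_gt0 ?ltr0n.
  have [N hN] := @ltr_add_invr _ 0 (e ^+ 2 / 4%:R) pos.
  exists N => n k hn hk.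
  apply: sqrt_lt => //; first exact: (qf_ge0 ipH_sesq).
  apply: le_lt_trans (cb n k) _.
  have := inv_nat_le R hn; have := inv_nat_le R hk.
  rewrite add0r in hN.
  set i1 := n.+1%:R^-1; set i2 := k.+1%:R^-1; set i3 := N.+1%:R^-1 in hN *; lra.
have [p hp] := @ip_complete _ _ H ms cauchy.
have Mp : M p := Mcl ms p (fun n => (msP n).1) hp.
have pmin : qH (x - p) <= d.
  rewrite leNgt; apply/negP => hlt.
  have sd := sqrtr_ge0 d.
  have hd : Num.sqrt d < Num.sqrt (qH (x - p)) by rewrite ltr_sqrt // (le_lt_trans d0).
  set g := Num.sqrt (qH (x - p)) - Num.sqrt d.
  have g0 : 0 < g by rewrite subr_gt0.
  have [N hN] := hp (g / 2%:R) (divr_gt0 g0 (ltr0n _ 2)).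
  have pos : 0 < g ^+ 2 / 4%:R by rewrite divr_gt0 ?exprn_gt0 ?ltr0n.
  have [k hk] := @ltr_add_invr _ 0 (g ^+ 2 / 4%:R) pos.
  have [Mn hn] := msP (N + k)%N.
  have hnp := hN (N + k)%N (leq_addr k N).
  have tri := sqrt_qfD ipH_sesq (x - ms (N+k)) (ms (N+k) - p).
  rewrite (_ : x - ms _ + (ms _ - p) = x - p) in tri; last by rewrite addrA subrK.
  have h1 : Num.sqrt (qH (x - ms (N + k))) < Num.sqrt d + g / 2%:R.
    apply: sqrt_lt; [exact: (qf_ge0 ipH_sesq) | by rewrite ltr_wpDl // divr_gt0 | ].
    have hi := inv_nat_le R (leq_addl N k).
    rewrite add0r in hk.
    have ht := sqr_sqrtr d0.
    have tg := mulr_ge0 sd (ltW g0).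
    apply: lt_le_trans hn _.
    set i1 := (N + k).+1%:R^-1 in hi *; set i2 := k.+1%:R^-1 in hk hi *.
    set t := Num.sqrt d in sd ht tg hd *.
    rewrite sqrrD -ht; nra.
  have : hnorm_of ipH (ms (N + k) - p) < g / 2%:R by [].
  rewrite /hnorm_of => h2.
  move: tri; rewrite /g in h1 h2 *; lra.
exists p; split => // m Mm.
set w := x - p; set c := ipH w m.
set s := (qH m + 1)^-1.
have qm0 := qf_ge0 ipH_sesq m.
have s0 : 0 < s by rewrite invr_gt0 ltr_pwDr.
have sq : s * (qH m + 1) = 1 by rewrite mulVf // gt_eqF // ltr_pwDr.
have Mpt : M (p + (s%:C * c) *: m) by rewrite addrC; apply: (Mlin).
have := d_le _ Mpt.
rewrite (_ : x - (p + _) = w - (s%:C * c) *: m); last by rewrite opprD addrA.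
rewrite (qfB ipH_sesq) (qfZ ipH_sesq) (fZr ipH_sesq) -/c.
rewrite normc2 !ReM !ImM ReJ ImJ !ReM !ImM ReC ImC.
move: pmin; rewrite -/w.
set c1 := complex.Re c; set c2 := complex.Im c.
set qm := qH m in qm0 sq *; set qw := qH w.
move=> h1 h2.
set B := c1 ^+ 2 + c2 ^+ 2.
have B0 : 0 <= B by rewrite /B; nra.
have h3 : 0 <= s * (s * qm) * B - 2 * s * B by rewrite /B; lra.
have sqm : s * qm = 1 - s by rewrite -sq; ring.
rewrite sqm in h3.
have hB : B <= 0 by nra.
move: hB; rewrite /B => hB.
apply: cplx_eq; rewrite -/c1 -/c2 /=; nra.
Qed.


Definition linop (T : V -> V) := forall (a : R[i]) x y, T (a *: x + y) = a *: T x + T y.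
Section Lin.
Variable T : V -> V.
Hypothesis hT : linop T.
Lemma lin0 : T 0 = 0.
Proof.
have := hT 1 0 0; rewrite scaler0 addr0 scale1r => h.
by move: h => /(congr1 (fun t => t - T 0)); rewrite subrr addrK.
Qed.
Lemma linD x y : T (x + y) = T x + T y.
Proof. by rewrite -[x in LHS]scale1r hT scale1r. Qed.
Lemma linZ a x : T (a *: x) = a *: T x.
Proof. by rewrite -[_ *: x]addr0 hT lin0 addr0. Qed.
Lemma linN x : T (- x) = - T x.
Proof. by rewrite -scaleN1r linZ scaleN1r. Qed.
Lemma linB x y : T (x - y) = T x - T y.
Proof. by rewrite linD linN. Qed.
End Lin.

Definition glin (g : V -> R[i]) := forall (a : R[i]) x y, g (a *: x + y) = a * g x + g y.
Section GLin.
Variable g : V -> R[i].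
Hypothesis hg : glin g.
Lemma glin0 : g 0 = 0.
Proof.
have := hg 1 0 0; rewrite scaler0 addr0 mul1r => h.
by move: h => /(congr1 (fun t => t - g 0)); rewrite subrr addrK.
Qed.
Lemma glinD x y : g (x + y) = g x + g y.
Proof. by rewrite -[x in LHS]scale1r hg mul1r. Qed.
Lemma glinZ a x : g (a *: x) = a * g x.
Proof. by rewrite -[_ *: x]addr0 hg glin0 addr0. Qed.
Lemma glinN x : g (- x) = - g x.
Proof. by rewrite -scaleN1r glinZ mulN1r. Qed.
Lemma glinB x y : g (x - y) = g x - g y.
Proof. by rewrite glinD glinN. Qed.
End GLin.

Lemma hnorm_ge0 x : 0 <= hnorm H x.
Proof. exact: sqrtr_ge0. Qed.
Lemma hnormN x : hnorm H (- x) = hnorm H x.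
Proof. by rewrite /hnorm /hnorm_of -/(qf ipH (- x)) (qfN ipH_sesq). Qed.
Lemma hnorm_eq0 x : hnorm H x = 0 -> x = 0.
Proof.
move=> /eqP; rewrite /hnorm /hnorm_of sqrtr_eq0 => h; apply: qH_eq0.
by apply/le_anti; rewrite h (qf_ge0 ipH_sesq).
Qed.

Lemma bounded_pos T : bounded_op H T ->
  exists K, 0 < K /\ forall x, hnorm H (T x) <= K * hnorm H x.
Proof.
case=> _ [M hM]; exists (`|M| + 1); split; first by have := normr_ge0 M; lra.
move=> x; apply: le_trans (hM x) _; apply: ler_wpM2r; first exact: hnorm_ge0.
have := ler_norm M; lra.
Qed.

Lemma ker_closed T : bounded_op H T -> closedS (fun x => T x = 0).
Proof.
move=> hT u l hu hc; have lin := hT.1; have [K [K0 hK]] := bounded_pos hT.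
apply: hnorm_eq0; apply: (small_eq0 (K := K)); first exact: hnorm_ge0.
move=> e e0; have [N hN] := hc e e0.
have -> : T l = - T (u N - l) by rewrite (linB lin) hu sub0r opprK.
rewrite hnormN; apply: le_trans (hK _) _; rewrite ler_wpM2l ?(ltW K0) //.
exact: ltW (hN N (leqnn N)).
Qed.

Lemma ker_subsp T : linop T -> subsp (fun x => T x = 0).
Proof. by move=> lin; split; [exact: lin0 | move=> a x y hx hy; rewrite lin hx hy scaler0 addr0]. Qed.

Lemma fker_closed (g : V -> R[i]) K : glin g -> (forall x, cmod (g x) <= K * hnorm H x) ->
  closedS (fun x => g x = 0).
Proof.
move=> lin gb u l hu hc.
apply: cmod_eq0; apply: (small_eq0 (K := `|K|)); first exact: cmod_ge0.
move=> e e0; have [N hN] := hc e e0.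
have -> : g l = - g (u N - l) by rewrite (glinB lin) hu sub0r opprK.
rewrite cmodN; apply: le_trans (gb _) _.
apply: le_trans (_ : _ <= `|K| * hnorm H (u N - l)) _.
  apply: ler_wpM2r; [exact: hnorm_ge0 | exact: ler_norm].
rewrite ler_wpM2l ?normr_ge0 //; exact: ltW (hN N (leqnn N)).
Qed.

Lemma riesz (g : V -> R[i]) K : glin g -> (forall x, cmod (g x) <= K * hnorm H x) ->
  exists v, forall x, g x = ipH x v.
Proof.
move=> gl gb.
have [allz|] := pselect (forall x, g x = 0).
  by exists 0 => x; rewrite allz (f0r ipH_sesq).
move=> /existsNP [x0 gx0].
have sM : subsp (fun x => g x = 0).
  by split; [exact: glin0 | move=> a x y hx hy; rewrite gl hx hy mulr0 addr0].
have [p [Np hp]] := projection sM (fker_closed gl gb) x0.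
set u := x0 - p.
have gu : g u = g x0 by rewrite (glinB gl) Np subr0.
have gu0 : g u != 0 by apply/eqP; rewrite gu.
have ipuu : ipH u u != 0.
  apply/eqP => /(@ip_eq0 _ _ H) u0; move: gu0; by rewrite u0 (glin0 gl) eqxx.
exists ((conjc (g u / ipH u u)) *: u) => x.
rewrite (fZr ipH_sesq) conjcK.
have hx : ipH (x - (g x / g u) *: u) u = 0.
  rewrite (f_conj ipH_sesq) (hp (x - (g x / g u) *: u)) ?conjc0 //.
  by rewrite (glinB gl) (glinZ gl) mulfVK // subrr.
rewrite (fBl ipH_sesq) (fZl ipH_sesq) in hx.
have -> : ipH x u = g x / g u * ipH u u by apply/eqP; rewrite -subr_eq0 hx.
by field; apply/andP.
Qed.

Lemma adjointP S : bounded_op H S -> forall x y, ipH (S x) y = ipH x (adjoint H S y).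
Proof.
move=> hS; have [K [K0 hK]] := bounded_pos hS.
have ex : exists Ts : V -> V, forall x y, ipH (S x) y = ipH x (Ts y).
  have r : forall y, exists v, forall x, ipH (S x) y = ipH x v.
    move=> y; apply: (@riesz (fun x => ipH (S x) y) (K * hnorm H y)).
      by move=> a x z /=; rewrite hS.1 (fDl ipH_sesq) (fZl ipH_sesq).
    move=> x; apply: le_trans (cmod_f_le ipH_sesq _ _) _.
    rewrite mulrAC; apply: ler_wpM2r; first exact: hnorm_ge0.
    exact: hK.
  by exists (fun y => proj1_sig (cid (r y))) => x y; exact: (proj2_sig (cid (r y)) x).
rewrite /adjoint; exact: (epsilon_spec _ _ ex).
Qed.

Lemma mp_invP A r : bounded_op H A -> A (mp_inv H A (A r)) = A r.
Proof.
move=> hA; have lin := hA.1.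
have [p [Np hp]] := projection (ker_subsp lin) (ker_closed hA) r.
have ex : exists x, (forall k, A k = 0 -> ipH x k = 0) /\ (forall w, ipH (A x - A r) (A w) = 0).
  exists (r - p); split; first exact: hp.
  by move=> w; rewrite (linB lin) Np subr0 subrr (f0l ipH_sesq).
have [_ h2] := epsilon_spec (inhabits 0) _ ex.
rewrite /mp_inv; set x' := epsilon _ _ in h2 *.
have := h2 (x' - r); rewrite (linB lin) => /(@ip_eq0 _ _ H) /eqP.
by rewrite subr_eq0 => /eqP.
Qed.

End Hilb.
Section AOps.
Variable R : realType.
Variable V : lmodType R[i].
Variable H : hilbert V.
Variable A : V -> V.
Hypothesis hA : positive_op H A.
Local Notation ipH := (ip H).
Local Notation ipAA := (ipA H A).

Lemma Alin : linop A.
Proof. by case: hA => [[]]. Qed.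

Lemma A_sym x y : ipH (A x) y = conjc (ipH (A y) x).
Proof.
have re z : complex.Im (ipH (A z) z) = 0 := ger0_Im (hA.2 z).
have e1 := re (x + y); have e2 := re (x + 'i%C *: y).
have ex := re x; have ey := re y.
rewrite (linD Alin) !(fDl (ipH_sesq H)) !(fDr (ipH_sesq H)) !ImD ex ey in e1.
rewrite (linD Alin) (linZ Alin) !(fDl (ipH_sesq H)) !(fDr (ipH_sesq H)) in e2.
rewrite !(fZl (ipH_sesq H)) !(fZr (ipH_sesq H)) !ImD !ImM !ReM ex ey /= in e2.
apply: cplx_eq; rewrite ?ReJ ?ImJ; lra.
Qed.

Lemma ipA_sesq : sesq ipAA.
Proof.
split; last split.
- by move=> a x y z; rewrite /ipA (Alin a x y) (fDl (ipH_sesq H)) (fZl (ipH_sesq H)).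
- by move=> x y; rewrite /ipA A_sym.
- by move=> x; exact: hA.2.
Qed.

Lemma A_sym' x y : ipH (A x) y = ipH x (A y).
Proof. by rewrite A_sym -(ip_conj H). Qed.

Lemma qA_le_h : exists KA, 0 < KA /\ forall y, qf ipAA y <= KA * hnorm H y ^+ 2.
Proof.
have [K [K0 hK]] := bounded_pos hA.1.
exists K; split => // y.
apply: le_trans (Ref_le (ipH_sesq H) (A y) y) _.
rewrite expr2 mulrA; apply: ler_wpM2r; first exact: hnorm_ge0.
exact: hK.
Qed.

Lemma abound (P Q : V -> V) : bounded_op H P -> bounded_op H Q ->
  (forall x y, ipAA (P x) y = ipAA x (Q y)) ->
  exists K, forall z, normA H A z = 1 -> normA H A (P z) <= K.
Proof.
move=> hP hQ hPQ.
have [KP [KP0 hKP]] := bounded_pos hP.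
have [KQ [KQ0 hKQ]] := bounded_pos hQ.
have [KA [KA0 hKA]] := qA_le_h.
set KT := KQ * KP.
have KT0 : 0 < KT by rewrite mulr_gt0.
pose T := fun x => Q (P x).
have symT : forall x y, ipAA (T x) y = ipAA x (T y).
  move=> x y; rewrite /T (f_conj ipA_sesq) -hPQ -(f_conj ipA_sesq) hPQ //.
have hT : forall k x, hnorm H (iter k T x) <= KT ^+ k * hnorm H x.
  elim=> [|k IH] x; first by rewrite expr0 mul1r.
  rewrite iterS /T; apply: le_trans (hKQ _) _.
  apply: le_trans (_ : _ <= KQ * (KP * hnorm H (iter k T x))) _.
    by rewrite ler_wpM2l ?(ltW KQ0) //; exact: hKP.
  have := IH x; rewrite exprS /KT => ih.
  by rewrite -!mulrA ler_wpM2l ?(ltW KQ0) // ler_wpM2l ?(ltW KP0) //.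
exists (Num.sqrt KT) => z nz.
pose a k := Num.sqrt (qf ipAA (iter k T z)).
have a0 : a 0%N = 1 by exact: nz.
have age0 k : 0 <= a k by exact: sqrtr_ge0.
have asq k : a k ^+ 2 = qf ipAA (iter k T z) by rewrite sqr_sqrtr // (qf_ge0 ipA_sesq).
have logc k : a k.+1 ^+ 2 <= a k * a k.+2.
  rewrite asq /qf [X in complex.Re (ipAA X _)]iterS symT.
  exact: (Ref_le ipA_sesq).
have step : forall k, a 1%N * a k <= a k.+1.
  elim=> [|k IH]; first by rewrite a0 mulr1.
  have L := logc k; have g1 := age0 1%N; have gk := age0 k.
  have gk1 := age0 k.+1; have gk2 := age0 k.+2.
  have [k0|kp] := eqVneq (a k) 0.
    rewrite k0 mul0r in L.
    have : a k.+1 = 0 by apply/eqP; rewrite -sqrf_eq0 eq_le L sqr_ge0.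
    by move=> ->; rewrite mulr0.
  have kpos : 0 < a k by rewrite lt_def kp gk.
  rewrite -(ler_pM2l kpos).
  apply: le_trans L.
  rewrite expr2 mulrA [a k * _]mulrC ler_wpM2r //.
have pw : forall k, a 1%N ^+ k <= a k.
  elim=> [|k IH]; first by rewrite expr0 a0.
  rewrite exprS; apply: le_trans (step k).
  by rewrite ler_wpM2l.
have bnd : forall k, (a 1%N ^+ 2) ^+ k <= (KA * hnorm H z ^+ 2) * (KT ^+ 2) ^+ k.
  move=> k; rewrite -exprM mulnC exprM.
  apply: le_trans (_ : a k ^+ 2 <= _).
    by rewrite ler_pXn2r ?nnegrE ?exprn_ge0 ?age0.
  rewrite asq; apply: le_trans (hKA _) _.
  rewrite -mulrA ler_wpM2l ?(ltW KA0) //.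
  rewrite -[(KT ^+ 2) ^+ k]exprM mulnC exprM -exprMn.
  rewrite ler_pXn2r ?nnegrE ?mulr_ge0 ?exprn_ge0 ?hnorm_ge0 ?(ltW KT0) //.
  by rewrite mulrC; exact: hT.
have a1 : a 1%N ^+ 2 <= KT ^+ 2.
  apply: (pow_bound (C := KA * hnorm H z ^+ 2)); first exact: sqr_ge0.
    exact: exprn_gt0.
  exact: bnd.
have a1' : a 1%N <= KT by apply: sq_le => //; exact: ltW.
apply: sq_le; [exact: sqrtr_ge0 | exact: sqrtr_ge0 |].
have e1 := sqr_sqrtr (ltW KT0).
have e2 := sqr_sqrtr (qf_ge0 ipA_sesq (P z)).
rewrite e1; rewrite /normA; rewrite /qf in e2; rewrite e2.
rewrite -/ipAA hPQ.
apply: le_trans (Ref_le ipA_sesq _ _) _.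
have -> : Num.sqrt (qf ipAA z) = 1 by exact: nz.
by rewrite mul1r.
Qed.

End AOps.
Section SupLemmas.
Variable R : realType.
Variable V : Type.
Local Open Scope classical_set_scope.

Lemma sup_sq_le (g : V -> R) (P : V -> Prop) (B : R) : (exists z, P z) -> 0 <= B ->
  (forall z, P z -> 0 <= g z /\ g z ^+ 2 <= B) ->
  sup [set r | exists z, P z /\ r = g z] ^+ 2 <= B.
Proof.
move=> [z0 Pz0] B0 hg.
set E := [set r | exists z, P z /\ r = g z].
have ub : forall r, E r -> r <= Num.sqrt B.
  move=> r [z [Pz ->]]; have [g0 g2] := hg z Pz.
  by apply: sq_le => //; [exact: sqrtr_ge0 | rewrite sqr_sqrtr].
have ne : E (g z0) by exists z0.
have hs : has_sup E by split; [exists (g z0) | exists (Num.sqrt B)].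
have s0 : 0 <= sup E by apply: le_trans (hg z0 Pz0).1 (sup_upper_bound hs ne).
have s1 : sup E <= Num.sqrt B by apply: ge_sup; [exists (g z0) | exact: ub].
by rewrite -(sqr_sqrtr B0) ler_pXn2r // nnegrE // sqrtr_ge0.
Qed.

Lemma sup_ge' (g : V -> R) (P : V -> Prop) (b : R) z : (forall z, P z -> g z <= b) -> P z ->
  g z <= sup [set r | exists z, P z /\ r = g z].
Proof.
move=> hb Pz; apply: sup_upper_bound; last by exists z.
by split; [exists (g z); exists z | exists b => r [y [Py ->]]; exact: hb].
Qed.

Lemma sup_empty (g : V -> R) (P : V -> Prop) : ~ (exists z, P z) ->
  sup [set r | exists z, P z /\ r = g z] = 0.
Proof.
move=> none; rewrite (_ : [set r | _] = set0) ?sup0 //.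
by apply/seteqP; split => r // [z [Pz _]]; apply: none; exists z.
Qed.
End SupLemmas.

Theorem theorem2p15 (R : realType) (V : lmodType R[i]) (H : hilbert V)
  (A S : V -> V) :
  positive_op H A -> in_BA H A S ->
  dnumradA H A S ^+ 2
    + 2%:R * opnormA H A S ^+ 2 * opnormA H A (ReA H A S)
  >= Num.max (numradA H A (fun x => S x + sharp H A S (S x)) ^+ 2)
             (numradA H A (fun x => S x - sharp H A S (S x)) ^+ 2).
Proof.
move=> hA hS.
have sA := ipA_sesq hA.
have [bS [Rop [bR hR]]] := hS.
have adj := adjointP bS.
have key1 : forall x y, ipA H A (S x) y = ipA H A x (Rop y).
  by move=> x y; rewrite /ipA (A_sym' hA) adj -hR -(A_sym' hA).
have key2 : forall x y, ipA H A (Rop x) y = ipA H A x (S y).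
  by move=> x y; rewrite (f_conj sA) -key1 -(f_conj sA).
have sharpA : forall x, A (sharp H A S x) = A (Rop x).
  by move=> x; rewrite /sharp -hR mp_invP //; exact: hA.1.
have ipA_sharp : forall x y, ipA H A (sharp H A S x) y = ipA H A (Rop x) y.
  by move=> x y; rewrite /ipA sharpA.
have qf_sharp : forall x, qf (ipA H A) (sharp H A S x) = qf (ipA H A) (Rop x).
  move=> x; rewrite /qf ipA_sharp (f_conj sA) ipA_sharp -(f_conj sA).
  by rewrite (f_conj sA) ReJ.
have [KS hKS] := abound hA bS bR key1.
have [KR hKR] := abound hA bR bS key2.
set P := fun z => normA H A z = 1.
have [[z0 nz0]|none] := pselect (exists z, P z); last first.
  rewrite /dnumradA /opnormA /numradA !sup_empty //.
  by rewrite maxxx !expr0n /= !mulr0 addr0.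
have nA_ge0 : forall v, 0 <= normA H A v by move=> v; exact: sqrtr_ge0.
have hN : forall z, P z -> normA H A (S z) <= opnormA H A S.
  move=> z Pz; rewrite /opnormA.
  exact: (@sup_ge' _ _ (fun z => normA H A (S z)) P KS).
have hReA_bd : forall z, P z -> normA H A (ReA H A S z) <= KS + KR.
  move=> z Pz; rewrite /ReA /normA -/(qf (ipA H A) _) (qfZ sA).
  apply: le_trans (_ : _ <= Num.sqrt (qf (ipA H A) (S z + sharp H A S z))) _.
    rewrite ler_sqrt ?(qf_ge0 sA) //.
    rewrite half_C normc2 ReC ImC.
    have := qf_ge0 sA (S z + sharp H A S z); set t := qf _ _ => t0.
    rewrite expr0n /= addr0; nra.
  apply: le_trans (sqrt_qfD sA _ _) _.
  rewrite qf_sharp; apply: lerD; [exact: hKS | exact: hKR].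
have hQ : forall z, P z -> normA H A (ReA H A S z) <= opnormA H A (ReA H A S).
  move=> z Pz; rewrite /opnormA.
  exact: (@sup_ge' _ _ (fun z => normA H A (ReA H A S z)) P (KS + KR)).
have hD : forall z, P z -> Num.sqrt (cmod (ipA H A (S z) z) ^+ 2 + normA H A (S z) ^+ 4)
                          <= dnumradA H A S.
  move=> z Pz; rewrite /dnumradA.
  apply: (@sup_ge' _ _ (fun z => Num.sqrt (cmod (ipA H A (S z) z) ^+ 2 + normA H A (S z) ^+ 4))
                   P (Num.sqrt (KS ^+ 2 + KS ^+ 4))) => // y Py.
  have h1 : cmod (ipA H A (S y) y) <= KS.
    apply: le_trans (cmod_f_le sA _ _) _.
    have -> : Num.sqrt (qf (ipA H A) y) = 1 by exact: Py.
    rewrite mulr1; exact: hKS.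
  have h2 := hKS y Py; have h3 := cmod_ge0 (ipA H A (S y) y); have h4 := nA_ge0 (S y).
  rewrite ler_sqrt; last by rewrite addr_ge0 ?exprn_ge0 //; lra.
  set c := cmod _ in h1 h3 *; set s := normA _ _ _ in h2 h4 *.
  have hs2 : s ^+ 2 <= KS ^+ 2 by exact: sq_mono.
  have hc2 : c ^+ 2 <= KS ^+ 2 by exact: sq_mono.
  have -> : s ^+ 4 = (s ^+ 2) ^+ 2 by rewrite -exprM.
  have -> : KS ^+ 4 = (KS ^+ 2) ^+ 2 by rewrite -exprM.
  have hs4 : (s ^+ 2) ^+ 2 <= (KS ^+ 2) ^+ 2.
    by apply: sq_mono => //; exact: sqr_ge0.
  lra.
set D := dnumradA H A S; set N := opnormA H A S; set Q := opnormA H A (ReA H A S).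
have Q0 : 0 <= Q by apply: le_trans (hQ z0 nz0); exact: nA_ge0.
have RHS0 : 0 <= D ^+ 2 + 2%:R * N ^+ 2 * Q.
  by apply: addr_ge0; [exact: sqr_ge0 | rewrite mulr_ge0 // mulr_ge0 // sqr_ge0].
have point : forall (sg : R[i]) z, (sg = 1 \/ sg = -1) -> P z ->
    cmod (ipA H A (S z + sg *: sharp H A S (S z)) z) ^+ 2 <= D ^+ 2 + 2%:R * N ^+ 2 * Q.
  move=> sg z hsg Pz.
  set a := ipA H A (S z) z.
  have nz : Num.sqrt (qf (ipA H A) z) = 1 by exact: Pz.
  have e1 : ipA H A (S z + sg *: sharp H A S (S z)) z = a + sg * (qf (ipA H A) (S z))%:C.
    by rewrite (fDl sA) (fZl sA) ipA_sharp key2 (f_diag sA).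
  have eRe : complex.Re (ipA H A (ReA H A S z) z) = complex.Re a.
    rewrite /ReA (fZl sA) (fDl sA) ipA_sharp key2 -/a (f_conj sA (S z) z) -/a.
    rewrite half_C ReM ReD ReJ ReC ImC; lra.
  have hRe : `|complex.Re a| <= Q.
    rewrite -eRe; apply: le_trans (Re_le_cmod _) _.
    apply: le_trans (cmod_f_le sA _ _) _; rewrite nz mulr1; exact: hQ.
  have hs := hN z Pz.
  have hs0 := nA_ge0 (S z).
  have hq : qf (ipA H A) (S z) = normA H A (S z) ^+ 2.
    by rewrite sqr_sqrtr // (qf_ge0 sA).
  have hd := hD z Pz.
  have hd2 : cmod a ^+ 2 + normA H A (S z) ^+ 4 <= D ^+ 2.
    have x0 : 0 <= cmod a ^+ 2 + normA H A (S z) ^+ 4.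
      by apply: addr_ge0; [exact: sqr_ge0 | exact: exprn_ge0 (nA_ge0 _)].
    rewrite -(sqr_sqrtr x0) ler_pXn2r // nnegrE ?sqrtr_ge0 //.
    exact: le_trans (sqrtr_ge0 _) hd.
  rewrite e1 hq; rewrite normc2 in hd2.
  have hRe' := hRe.
  move: hRe'; rewrite ler_norml => /andP [hR1 hR2].
  have hsN : normA H A (S z) ^+ 2 <= N ^+ 2 by exact: sq_mono.
  have h4 : normA H A (S z) ^+ 4 = (normA H A (S z) ^+ 2) ^+ 2 by rewrite -exprM.
  rewrite h4 in hd2.
  set t := normA H A (S z) ^+ 2 in hsN hd2 *.
  have t0 : 0 <= t by exact: sqr_ge0.
  set a1 := complex.Re a in hd2 hR1 hR2 *; set a2 := complex.Im a in hd2 *.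
  have m1 : t * a1 <= t * Q by rewrite ler_wpM2l.
  have m2 : - (t * a1) <= t * Q by rewrite -mulrN ler_wpM2l //; lra.
  have m3 : t * Q <= N ^+ 2 * Q by rewrite ler_wpM2r.
  case: hsg => ->; rewrite ?mul1r ?mulN1r normc2 ?ReD ?ImD ?ReN ?ImN ReC ImC -/a1 -/a2.
    nra.
  nra.
rewrite ge_max; apply/andP; split; rewrite /numradA.
  apply: (@sup_sq_le _ _ (fun z => cmod (ipA H A (S z + sharp H A S (S z)) z)) P) => //.
    by exists z0.
  move=> z Pz; split; first exact: cmod_ge0.
  by have := point 1 z (or_introl erefl) Pz; rewrite scale1r.
apply: (@sup_sq_le _ _ (fun z => cmod (ipA H A (S z - sharp H A S (S z)) z)) P) => //.
  by exists z0.
move=> z Pz; split; first exact: cmod_ge0.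
by have := point (-1) z (or_intror erefl) Pz; rewrite scaleN1r.
Qed.
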